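(* Let $G$ be a finite graph with $n$ vertices given together with an RDV representation (rooted host tree $T$). Let $v_1,\dots,v_n$ be any bottom-up enumeration of the vertices of $G$ with respect to this representation. Then the greedy matching algorithm, run on $G$ with vertex order $v_1,\dots,v_n$, returns a maximum matching of $G$, i.e., a matching of largest possible cardinality.
   Context: An RDV representation of a graph $G$ consists of a rooted tree $T$ (the host tree; its vertices are called nodes) and, for every vertex $v$ of $G$, a downward path $P(v)$ in $T$ (a path that starts at some node and then always proceeds from a node to one of its children), such that for distinct vertices $v,w$, $vw$ is an edge of $G$ if and only if $P(v)$ and $P(w)$ share at least one node. For a vertex $v$, $t(v)$ denotes the node of $P(v)$ closest to the root, and $b(v)$ the node of $P(v)$ farthest from the root. A bottom-up enumeration is an ordering of the vertices of $G$ by non-increasing distance of $t(v)$ from the root of $T$ (ties broken arbitrarily). The greedy matching algorithm with vertex order $v_1,\dots,v_n$: start with $M=\emptyset$; for $i=1,\dots,n$, if $v_i$ is not yet matched (not an endpoint of an edge of $M$) and has at least one unmatched neighbour, then among its unmatched neighbours choose the one $v_j$ with smallest index $j$ and add the edge $v_iv_j$ to $M$; finally return $M$. *)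

(* Defs.v *)
From HB Require Import structures.
From mathcomp Require Import all_boot.
Set Implicit Arguments. Unset Strict Implicit. Unset Printing Implicit Defensive.

Definition rooted_tree (N : finType) (root : N) (parent : N -> N) : Prop :=
  parent root = root /\ forall x : N, exists k, iter k parent x = root.

(* [ancestor parent a x]: a lies on the path from x to the root (reflexive). *)
Definition ancestor (N : finType) (parent : N -> N) (a x : N) : bool :=
  [exists k : 'I_#|N|.+1, iter k parent x == a].

Definition depth (N : finType) (parent : N -> N) (x : N) : nat :=
  #|[set a | ancestor parent a x]|.-1.

Definition on_dpath (N : finType) (parent : N -> N) (t b x : N) : bool :=
  ancestor parent t x && ancestor parent x b.

(* RDV representation of the graph (V, e): vertex v gets downward path P(v)
   from t v down to b v. *)
Definition rdv_rep (V N : finType) (e : rel V) (root : N) (parent : N -> N)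
    (t b : V -> N) : Prop :=
  rooted_tree root parent /\
  (forall v, ancestor parent (t v) (b v)) /\
  (forall v w, v != w ->
     e v w = [exists x, on_dpath parent (t v) (b v) x && on_dpath parent (t w) (b w) x]).

Definition bottom_up (V N : finType) (parent : N -> N) (t : V -> N) (s : seq V) : Prop :=
  perm_eq s (enum V) /\
  sorted (fun x y => depth parent (t y) <= depth parent (t x)) s.

Definition matched_vertices (V : finType) (M : seq (V * V)) : seq V :=
  flatten [seq [:: p.1; p.2] | p <- M].

Definition is_matching (V : finType) (e : rel V) (M : seq (V * V)) : Prop :=
  all (fun p => e p.1 p.2) M /\ uniq (matched_vertices M).

Definition maximum_matching (V : finType) (e : rel V) (M : seq (V * V)) : Prop :=
  is_matching e M /\ forall M', is_matching e M' -> size M' <= size M.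

Definition greedy_step (V : finType) (e : rel V) (s : seq V)
    (M : seq (V * V)) (v : V) : seq (V * V) :=
  if v \in matched_vertices M then M else
  match [seq w <- s | e v w & w \notin matched_vertices M] with
  | w :: _ => rcons M (v, w)
  | [::] => M
  end.

Definition greedy_matching (V : finType) (e : rel V) (s : seq V) : seq (V * V) :=
  foldl (greedy_step e s) [::] s.

(* Main.v *)
Require Import Defs.
From mathcomp Require Import all_boot.
From mathcomp Require Import zify.
From Stdlib Require Import Classical.
Set Implicit Arguments. Unset Strict Implicit. Unset Printing Implicit Defensive.

Lemma iter_fix (T : Type) (f : T -> T) (c : T) n : f c = c -> iter n f c = c.
Proof. move=> H; elim: n => //= n ->; exact H. Qed.

Lemma iter_mul (T:Type) (f:T->T) c d n : iter d f c = c -> iter (n*d) f c = c.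
Proof. move=> H; elim: n => [|n IH] //=. by rewrite mulSn iterD IH H. Qed.

Lemma periodic_root (N : finType) (root : N) parent c d :
  rooted_tree root parent -> iter d parent c = c -> 0 < d -> c = root.
Proof.
move=> [Hr Hreach] Hc Hd; case: (Hreach c) => n Hn.
have E := iter_mul n Hc.
have Hle : n <= n * d by rewrite leq_pmulr.
rewrite -{1}E -(subnK Hle) iterD Hn iter_fix //.
Qed.

Definition ancp (N : finType) (parent : N -> N) (a x : N) := exists k, iter k parent x = a.

Lemma ancP (N : finType) (root : N) parent a x :
  rooted_tree root parent -> ancestor parent a x <-> ancp parent a x.
Proof.
move=> Ht; split.
  by case/existsP => k /eqP Hk; exists k.
case=> k Hk.
pose f := fun i : 'I_#|N|.+1 => iter i parent x.
have [i [j [Hij Hf]]] : exists i j : 'I_#|N|.+1, i != j /\ f i = f j.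
  apply: NNPP => Hn.
  have Hinj : injective f.
    move=> i j Hf; apply/eqP; apply: contraT => Hij; exfalso; apply: Hn; by exists i, j.
  by have := leq_card f Hinj; rewrite card_ord ltnn.
have [i0 [j0 [Hlt [Hj Heq]]]] : exists i0 j0, i0 < j0 /\ j0 <= #|N| /\
     iter i0 parent x = iter j0 parent x.
  case: (ltngtP i j) => H.
  - by exists i, j; split => //; split; [rewrite -ltnS ltn_ord | exact Hf].
  - by exists j, i; split => //; split; [rewrite -ltnS ltn_ord | exact (esym Hf)].
  - by move/val_inj: H => H; rewrite H eqxx in Hij.
have Hc : iter i0 parent x = root.
  apply: (@periodic_root N root parent _ (j0 - i0) Ht); last by rewrite subn_gt0.
  rewrite -(iterD (j0 - i0) i0 parent x) subnK; [exact: esym Heq | exact: ltnW].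
apply/existsP.
case: (leqP k #|N|) => Hk'.
  by exists (Ordinal (n := #|N|.+1) (m := k) Hk'); apply/eqP.
have Hi : i0 < #|N|.+1 by lia.
exists (Ordinal Hi) => /=; apply/eqP.
have Hle : i0 <= k by lia.
by rewrite -Hk -(subnK Hle) iterD Hc iter_fix //; case: Ht.
Qed.

Lemma anc_refl (N : finType) (parent : N -> N) a : ancestor parent a a.
Proof. by apply/existsP; exists ord0. Qed.

Lemma anc_trans (N : finType) (root : N) parent a b c :
  rooted_tree root parent -> ancestor parent a b -> ancestor parent b c -> ancestor parent a c.
Proof.
move=> Ht /(ancP _ _ Ht) [k Hk] /(ancP _ _ Ht) [m Hm]; apply/(ancP _ _ Ht).
by exists (k + m); rewrite iterD Hm.
Qed.

Lemma anc_antisym (N : finType) (root : N) parent a b :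
  rooted_tree root parent -> ancestor parent a b -> ancestor parent b a -> a = b.
Proof.
move=> Ht /(ancP _ _ Ht) [k Hk] /(ancP _ _ Ht) [m Hm].
case: (posnP (k + m)) => H.
  have Hk0 : k = 0 by lia.
  by rewrite -Hk Hk0.
have Ha : a = root.
  apply: (@periodic_root N root parent a (k + m) Ht) => //.
  by rewrite iterD Hm.
by rewrite -Hm Ha iter_fix //; case: Ht.
Qed.

Lemma anc_total (N : finType) (root : N) parent a b x :
  rooted_tree root parent -> ancestor parent a x -> ancestor parent b x ->
  ancestor parent a b || ancestor parent b a.
Proof.
move=> Ht /(ancP _ _ Ht) [i Hi] /(ancP _ _ Ht) [j Hj].
case: (leqP i j) => H.
  apply/orP; right; apply/(ancP _ _ Ht); exists (j - i).
  by rewrite -Hi -Hj -(iterD (j - i) i parent x) subnK.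
apply/orP; left; apply/(ancP _ _ Ht); exists (i - j).
by rewrite -Hi -Hj -(iterD (i - j) j parent x) subnK // ltnW.
Qed.

Lemma depth_le (N : finType) (root : N) parent a b :
  rooted_tree root parent -> ancestor parent a b -> depth parent a <= depth parent b.
Proof.
move=> Ht Hab; rewrite /depth.
have Hs : [set c | ancestor parent c a] \subset [set c | ancestor parent c b].
  by apply/subsetP => c; rewrite !inE => Hc; exact: anc_trans Ht Hc Hab.
have := subset_leq_card Hs. lia.
Qed.

Lemma depth_lt (N : finType) (root : N) parent a b :
  rooted_tree root parent -> ancestor parent a b -> a != b -> depth parent a < depth parent b.
Proof.
move=> Ht Hab Hne; rewrite /depth.
have Hs : [set c | ancestor parent c a] \proper [set c | ancestor parent c b].
  apply/properP; split.
    by apply/subsetP => c; rewrite !inE => Hc; exact: anc_trans Ht Hc Hab.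
  exists b; first by rewrite inE anc_refl.
  rewrite inE; apply/negP => Hba.
  by rewrite (anc_antisym Ht Hab Hba) eqxx in Hne.
have H1 := proper_card Hs.
have H0 : 0 < #|[set c | ancestor parent c a]|.
  by apply/card_gt0P; exists a; rewrite inE anc_refl.
lia.
Qed.

Lemma anc_le (N : finType) (root : N) parent a b x :
  rooted_tree root parent -> ancestor parent a x -> ancestor parent b x ->
  depth parent a <= depth parent b -> ancestor parent a b.
Proof.
move=> Ht Ha Hb Hd.
case/orP: (anc_total Ht Ha Hb) => // Hba.
case: (eqVneq b a) => [->|Hne]; first exact: anc_refl.
have := depth_lt Ht Hba Hne; by rewrite ltnNge Hd.
Qed.

Lemma rdv_edge (V N : finType) (e : rel V) root parent (t b : V -> N) v u :
  rdv_rep e root parent t b -> e v u -> v != u ->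
  exists x, on_dpath parent (t v) (b v) x && on_dpath parent (t u) (b u) x.
Proof. move=> [_ [_ H]] Hvu Hne; move: Hvu; rewrite H // => /existsP [x Hx]; by exists x. Qed.

Lemma rdv_mk (V N : finType) (e : rel V) root parent (t b : V -> N) v u x :
  rdv_rep e root parent t b -> v != u ->
  on_dpath parent (t v) (b v) x -> on_dpath parent (t u) (b u) x -> e v u.
Proof. move=> [_ [_ H]] Hne H1 H2; rewrite H //; apply/existsP; exists x; by rewrite H1 H2. Qed.

Lemma N1 (V N : finType) (e : rel V) root parent (t b : V -> N) v u :
  rdv_rep e root parent t b -> e v u -> v != u ->
  depth parent (t u) <= depth parent (t v) ->
  ancestor parent (t u) (t v) && ancestor parent (t v) (b u).
Proof.
move=> Hr Hvu Hne Hd; have Ht := Hr.1.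
case: (rdv_edge Hr Hvu Hne) => x /andP [/andP [H1 H2] /andP [H3 H4]].
rewrite (anc_le Ht H3 H1 Hd) /=; exact: anc_trans Ht H1 H4.
Qed.

Lemma geo (V N : finType) (e : rel V) root parent (t b : V -> N) v u w z :
  rdv_rep e root parent t b ->
  e v u -> e v w -> e w z -> v != u -> v != w -> w != z -> u != z ->
  depth parent (t u) <= depth parent (t w) -> depth parent (t w) <= depth parent (t v) ->
  depth parent (t z) <= depth parent (t v) -> e u z.
Proof.
move=> Hr Hvu Hvw Hwz Hnvu Hnvw Hnwz Hnuz Huw Hwv Hzv.
have Ht := Hr.1.
have Hrb : forall y, ancestor parent (t y) (b y) := Hr.2.1.
have Hduv : depth parent (t u) <= depth parent (t v) := leq_trans Huw Hwv.
case/andP: (N1 Hr Hvu Hnvu Hduv) => Hu1 Hu2.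
case/andP: (N1 Hr Hvw Hnvw Hwv) => Hw1 Hw2.
have Huw' := anc_le Ht Hu1 Hw1 Huw.
case: (rdv_edge Hr Hwz Hnwz) => x /andP [/andP [H1 H2] /andP [H3 H4]].
case/orP: (anc_total Ht H3 H1) => Hzw.
- apply: (rdv_mk (x := t w) Hr Hnuz); apply/andP; split => //.
    exact: anc_trans Ht Hw1 Hu2.
  exact: anc_trans Ht H1 H4.
- have Hzb := anc_trans Ht H3 H2.
  have Hzv' := anc_le Ht Hzb Hw2 Hzv.
  apply: (rdv_mk (x := t z) Hr Hnuz); apply/andP; split.
  + exact: anc_trans Ht Huw' Hzw.
  + exact: anc_trans Ht Hzv' Hu2.
  + exact: anc_refl.
  + exact: Hrb.
Qed.

Notation cov := matched_vertices.

Lemma covC (V : finType) (p : V * V) M : cov (p :: M) = p.1 :: p.2 :: cov M.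
Proof. by []. Qed.

Lemma cov_cat (V : finType) (A B : seq (V * V)) : cov (A ++ B) = cov A ++ cov B.
Proof. by rewrite /matched_vertices map_cat flatten_cat. Qed.

Lemma cov_rcons (V : finType) (M : seq (V * V)) p : cov (rcons M p) = cov M ++ [:: p.1; p.2].
Proof. by rewrite -cats1 cov_cat. Qed.

Lemma size_cov (V : finType) (M : seq (V * V)) : size (cov M) = 2 * size M.
Proof. elim: M => [|p M IH] //; rewrite covC /= IH; lia. Qed.

Lemma perm_swap (T : eqType) (x y : T) r : perm_eq (x :: y :: r) (y :: x :: r).
Proof. apply/permPl => s; exact: (perm_catCA [:: x] [:: y] r s). Qed.

Lemma uniq_swap (T : eqType) (a b : seq T) x y :
  uniq (a ++ x :: b) -> y \notin a ++ x :: b -> uniq (a ++ y :: b).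
Proof.
have P z : perm_eq (a ++ z :: b) (z :: (a ++ b)).
  by apply/permPl => s; rewrite -(perm_catCA a [:: z] b s).
rewrite (perm_uniq (P x)) (perm_uniq (P y)) (perm_mem (P x)) /= !inE negb_or.
by move=> /andP [_ Hu] /andP [_ Hy]; rewrite Hy Hu.
Qed.

Lemma uniq_disj (T : eqType) (a b : seq T) x : uniq (a ++ b) -> x \in b -> x \notin a.
Proof. by rewrite cat_uniq => /and3P [_ /hasPn H _] /H. Qed.

Lemma extract (V : finType) (e : rel V) (R : seq (V * V)) x : symmetric e ->
  x \in cov R -> all (fun p => e p.1 p.2) R ->
  exists y R0, [/\ e x y, all (fun p => e p.1 p.2) R0,
    perm_eq (cov R) (x :: y :: cov R0) & size R = (size R0).+1].
Proof.
move=> Hsym; elim: R => [|p R IH] //.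
rewrite covC /= !inE => Hx /andP [Hp HR].
case: (eqVneq x p.1) => [->|Hx1]; first by exists p.2, R; split.
case: (eqVneq x p.2) => [->|Hx2].
  exists p.1, R; split => //; first by rewrite Hsym.
  exact: perm_swap.
have HxR : x \in cov R by move: Hx; rewrite (negPf Hx1) (negPf Hx2).
case: (IH HxR HR) => y [R0 [H1 H2 H3 H4]].
exists y, (p :: R0); split => //=; first by rewrite Hp.
  apply: (@perm_trans _ ([:: p.1; p.2] ++ [:: x; y] ++ cov R0)); first by rewrite /= !perm_cons.
  by apply/permPl => s; exact: (perm_catCA [:: p.1; p.2] [:: x; y] (cov R0) s).
by rewrite H4.
Qed.

Lemma exchange (V : finType) (e : rel V) (M R : seq (V * V)) v w :
  symmetric e ->
  maximum_matching e (M ++ R) ->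
  v \notin cov M -> w \notin cov M -> e v w -> v != w ->
  (forall u z, e v u -> u \notin cov M -> u != w -> e w z ->
       z \notin cov M -> z != v -> u != z -> e u z) ->
  exists R', maximum_matching e (rcons M (v, w) ++ R').
Proof.
move=> Hsym [[Hall Huniq] Hmax] HvM HwM Hvw Hneq Hgood.
rewrite cov_cat in Huniq; rewrite all_cat in Hall; case/andP: Hall => HallM HallR.
have maxC : forall R', all (fun p => e p.1 p.2) R' -> uniq (cov M ++ v :: w :: cov R') ->
    size (M ++ R) <= size (rcons M (v, w) ++ R') -> maximum_matching e (rcons M (v, w) ++ R').
  move=> R' HR' HU Hs; split; last by move=> M' /Hmax H; exact: leq_trans H Hs.
  split; first by rewrite all_cat all_rcons /= Hvw HallM HR'.
  by rewrite cov_cat cov_rcons -catA.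
have disj : forall x, x \in cov R -> x \notin cov M by move=> x; apply: uniq_disj.
case HvR: (v \in cov R).
- case: (extract Hsym HvR HallR) => u [R1 [Hvu HallR1 Hperm Hsz]].
  have HuR : u \in cov R by rewrite (perm_mem Hperm) !inE eqxx orbT.
  have HuM := disj u HuR.
  have P1 : perm_eq (cov M ++ cov R) (cov M ++ v :: u :: cov R1) by rewrite perm_cat2l.
  have Huniq1 : uniq (cov M ++ v :: u :: cov R1) by rewrite -(perm_uniq P1).
  case: (eqVneq u w) => [Euw | Huw].
  + exists R1; apply: maxC => //; first by rewrite -Euw.
    by rewrite !size_cat size_rcons Hsz !addnS !addSn.
  + case HwR: (w \in cov R).
    * have HwR1 : w \in cov R1.
        move: HwR; rewrite (perm_mem Hperm) !inE => /orP [/eqP Ew|/orP [/eqP Ew|//]].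
          by rewrite Ew eqxx in Hneq.
        by rewrite Ew eqxx in Huw.
      case: (extract Hsym HwR1 HallR1) => z [R0 [Hwz HallR0 Hperm1 Hsz1]].
      have P2 : perm_eq (cov M ++ v :: u :: cov R1) (cov M ++ v :: u :: w :: z :: cov R0).
        by rewrite perm_cat2l !perm_cons.
      have Huniq2 : uniq (cov M ++ v :: u :: w :: z :: cov R0) by rewrite -(perm_uniq P2).
      have Hu4 : uniq (v :: u :: w :: z :: cov R0).
        by move: Huniq2; rewrite cat_uniq => /and3P [].
      have HzM : z \notin cov M by apply: (uniq_disj Huniq2); rewrite !inE eqxx !orbT.
      have Hzv : z != v.
        by apply/eqP => E; move: Hu4; rewrite E /= !inE eqxx !(orbT, andbF).
      have Huz : u != z.
        by apply/eqP => E; move: Hu4; rewrite E /= !inE eqxx !(orbT, andbF, andFb).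
      exists ((u, z) :: R0); apply: maxC.
      -- by rewrite /= (Hgood u z) // HallR0.
      -- have P3 : perm_eq (cov M ++ v :: w :: cov ((u, z) :: R0))
                     (cov M ++ v :: u :: w :: z :: cov R0).
           by rewrite perm_cat2l perm_cons covC /=; exact: perm_swap.
         by rewrite (perm_uniq P3).
      -- by rewrite !size_cat size_rcons /= Hsz Hsz1 !addnS !addSn.
    * exists R1; apply: maxC => //.
      -- have E : cov M ++ v :: w :: cov R1 = (cov M ++ [:: v]) ++ w :: cov R1 by rewrite -catA.
         rewrite E; apply: (uniq_swap (x := u)); first by rewrite -catA.
         have Hw' : w \notin v :: u :: cov R1 by rewrite -(perm_mem Hperm) HwR.
         by rewrite -catA mem_cat negb_or HwM /=.
      -- by rewrite !size_cat size_rcons Hsz !addnS !addSn.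
- case HwR: (w \in cov R).
  + case: (extract Hsym HwR HallR) => z [R0 [Hwz HallR0 Hperm Hsz]].
    exists R0; apply: maxC => //.
    * have P : perm_eq (cov M ++ v :: w :: cov R0) ((cov M ++ [:: w]) ++ v :: cov R0).
        by rewrite -catA perm_cat2l; exact: perm_swap.
      rewrite (perm_uniq P); apply: (uniq_swap (x := z)).
        have P1 : perm_eq (cov M ++ cov R) (cov M ++ w :: z :: cov R0) by rewrite perm_cat2l.
        by rewrite -catA /= -(perm_uniq P1).
      have Hv' : v \notin w :: z :: cov R0 by rewrite -(perm_mem Hperm) HvR.
      by rewrite -catA mem_cat negb_or HvM /=.
    * by rewrite !size_cat size_rcons Hsz !addnS !addSn.
  + exfalso.
    have Hm : is_matching e ((v, w) :: M ++ R).
      split; first by rewrite /= Hvw all_cat HallM HallR.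
      by rewrite covC cov_cat /= !inE !mem_cat !negb_or HvM HwM HvR HwR Huniq Hneq.
    by move: (Hmax _ Hm); rewrite /= ltnn.
Qed.

Definition Inv (V : finType) (e : rel V) (M : seq (V * V)) (p : seq V) : Prop :=
  (forall x, x \in p -> x \in cov M \/ (forall y, e x y -> y \in cov M)) /\
  exists R, maximum_matching e (M ++ R).

Lemma filter_first (T : eqType) (r : rel T) (P : pred T) s w l u :
  transitive r -> sorted r s -> [seq x <- s | P x] = w :: l -> u \in s -> P u -> u != w -> r w u.
Proof.
move=> Htr; elim: s => [|x s IH] //= Hs.
have Hs' : sorted r s := path_sorted Hs.
case Px: (P x).
- case=> Ew _; rewrite inE => /orP [/eqP Eu|Hu] Pu Huw; first by rewrite Eu Ew eqxx in Huw.
  move: Hs; rewrite (path_sortedE Htr) => /andP [/allP Ha _]; rewrite -Ew; exact: Ha.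
- move=> Hf; rewrite inE => /orP [/eqP Eu|Hu] Pu Huw; first by rewrite Eu Px in Pu.
  exact: IH Hs' Hf Hu Pu Huw.
Qed.

Lemma step_inv (V N : finType) (e : rel V) root parent (t b : V -> N) s p v q M :
  symmetric e -> irreflexive e -> rdv_rep e root parent t b -> bottom_up parent t s ->
  s = p ++ v :: q -> Inv e M p -> Inv e (greedy_step e s M v) (rcons p v).
Proof.
move=> Hsym Hirr Hr [Hperm Hsort] Hs [HB [R HR]].
have Hmem : forall x, x \in s by move=> x; rewrite (perm_mem Hperm) mem_enum.
have HBr : forall M', (forall x, x \in cov M -> x \in cov M') ->
    (v \in cov M' \/ forall y, e v y -> y \in cov M') ->
    (forall x, x \in rcons p v -> x \in cov M' \/ forall y, e x y -> y \in cov M').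
  move=> M' Hsub Hv x; rewrite mem_rcons inE => /orP [/eqP ->|Hx] //.
  case: (HB x Hx) => [H|H]; [left; exact: Hsub | right => y /H; exact: Hsub].
rewrite /greedy_step.
case HvM: (v \in cov M).
  split; last by exists R.
  by apply: HBr => //; left.
have HvM' : v \notin cov M by rewrite HvM.
set F := [seq w <- s | e v w & w \notin cov M].
case HF: F => [|w l].
  split; last by exists R.
  apply: HBr => //; right => y Hy; apply: contraT => Hn.
  have : y \in F by rewrite mem_filter Hy Hn Hmem.
  by rewrite HF.
split.
  apply: HBr; first by move=> x Hx; rewrite cov_rcons mem_cat Hx.
  by left; rewrite cov_rcons mem_cat !inE eqxx orbT.
have Hw : w \in F by rewrite HF inE eqxx.
move: Hw; rewrite mem_filter => /andP [/andP [Hvw HwM] _].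
have Hnvw : v != w by apply/eqP => E; rewrite E Hirr in Hvw.
pose r := (fun x y => depth parent (t y) <= depth parent (t x)).
have Htr : transitive r by move=> y x z H1 H2; exact: leq_trans H2 H1.
have Hafter : forall x, x \in q -> depth parent (t x) <= depth parent (t v).
  move: Hsort; rewrite Hs sorted_cat_cons => /andP [_ Hpath] x Hx.
  move: Hpath; rewrite (path_sortedE Htr) => /andP [/allP H _]; exact: H.
have notp : forall x y, x \notin cov M -> y \notin cov M -> e x y -> x \notin p.
  move=> x y Hx Hy Hxy; apply/negP => Hxp.
  case: (HB x Hxp) => [H|H]; first by rewrite H in Hx.
  by move: (H y Hxy); rewrite (negPf Hy).
have inq : forall x, x \notin p -> x != v -> x \in q.
  move=> x Hp Hv; move: (Hmem x); rewrite Hs mem_cat (negPf Hp) /= inE (negPf Hv) //.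
have Hwv : depth parent (t w) <= depth parent (t v).
  apply: Hafter; apply: inq; last by rewrite eq_sym.
  by apply: (notp w v) => //; rewrite Hsym.
have Hg : forall u z, e v u -> u \notin cov M -> u != w -> e w z ->
       z \notin cov M -> z != v -> u != z -> e u z.
  move=> u z Hvu HuM Huw Hwz HzM Hzv Huz.
  have Hnvu : v != u by apply/eqP => E; rewrite E Hirr in Hvu.
  have Hnwz : w != z by apply/eqP => E; rewrite E Hirr in Hwz.
  apply: (geo Hr Hvu Hvw Hwz Hnvu Hnvw Hnwz Huz).
  - apply: (filter_first (r := r) (P := fun x => e v x && (x \notin cov M)) Htr Hsort HF (Hmem u)) => //.
    by rewrite Hvu HuM.
  - exact: Hwv.
  - apply: Hafter; apply: inq => //.
    by apply: (notp z w) => //; rewrite Hsym.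
have [R' HR'] := exchange Hsym HR HvM' HwM Hvw Hnvw Hg.
by exists R'.
Qed.

Lemma fold_inv (V N : finType) (e : rel V) root parent (t b : V -> N) s :
  symmetric e -> irreflexive e -> rdv_rep e root parent t b -> bottom_up parent t s ->
  forall q p M, s = p ++ q -> Inv e M p -> Inv e (foldl (greedy_step e s) M q) s.
Proof.
move=> Hsym Hirr Hr Hbu; elim=> [|v q IH] p M Hs HI /=.
  by rewrite Hs cats0.
apply: (IH (rcons p v)); first by rewrite cat_rcons.
exact: step_inv Hsym Hirr Hr Hbu Hs HI.
Qed.

Lemma exists_max (V : finType) (e : rel V) : exists M, maximum_matching e M.
Proof.
apply: NNPP => Hn.
have H : forall M, is_matching e M -> exists M', is_matching e M' /\ size M < size M'.
  move=> M HM; apply: NNPP => H1; apply: Hn; exists M; split => // M' HM'.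
  rewrite leqNgt; apply/negP => Hlt; apply: H1; by exists M'.
have Hn' : forall n, exists M, is_matching e M /\ n <= size M.
  elim=> [|n [M [HM Hs]]]; first by exists [::].
  case: (H M HM) => M' [HM' Hlt]; exists M'; split => //; exact: leq_ltn_trans Hs Hlt.
case: (Hn' #|V|.+1) => M [[_ HU] Hs].
have Hle : size (cov M) <= #|V| by rewrite -(card_uniqP HU); exact: max_card.
rewrite size_cov in Hle.
have : #|V|.+1 <= 2 * size M by apply: (leq_trans Hs); rewrite leq_pmull.
by move=> /(leq_trans)/(_ Hle); rewrite ltnn.
Qed.

Theorem theorem1 (V N : finType) (e : rel V) (root : N) (parent : N -> N)
    (t b : V -> N) (s : seq V) :
  symmetric e -> irreflexive e ->
  rdv_rep e root parent t b ->
  bottom_up parent t s ->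
  maximum_matching e (greedy_matching e s).
Proof.
move=> Hsym Hirr Hr Hbu.
have HI0 : Inv e [::] [::].
  split => //; case: (exists_max e) => M HM; exists M; exact HM.
have [HB [R HR]] := fold_inv Hsym Hirr Hr Hbu (erefl s : s = [::] ++ s) HI0.
rewrite /greedy_matching.
move: HB HR; set Mf := foldl _ _ _ => HB HR.
case: R HR => [|pr R'] HR; first by rewrite cats0 in HR.
exfalso; case: HR => [[Hall Hu] _].
rewrite cov_cat covC in Hu; rewrite all_cat /= in Hall.
have H1 : pr.1 \notin cov Mf by apply: (uniq_disj Hu); rewrite inE eqxx.
have H2 : pr.2 \notin cov Mf by apply: (uniq_disj Hu); rewrite !inE eqxx orbT.
have He : e pr.1 pr.2 by case/and3P: Hall.
have Hin : pr.1 \in s by rewrite (perm_mem Hbu.1) mem_enum.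
case: (HB _ Hin) => [H|H]; first by rewrite H in H1.
by rewrite (H _ He) in H2.
Qed.
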